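(* Let $n\ge 1$ and let $s$ be an even integer with $0\le s\le n(n-1)$. Put $$p=\left\lfloor \frac{\sqrt{4s+1}-1}{2}\right\rfloor,\qquad q=\frac{s-p(p+1)}{2}.$$ Then $q$ is an integer with $0\le q\le p$, and $T(n,s)$ is the length-$n$ sequence whose first $q$ entries equal $p+1$, whose next $p+1-q$ entries equal $p$, whose $(p+2)$-nd entry (if $n\ge p+2$) equals $q$, and all of whose remaining entries equal $0$; i.e. $T(n,s)=\langle (p+1)^{q},\,p^{\,p+1-q},\,q,\,0^{\,n-p-2}\rangle$ (when $n=p+1$, necessarily $q=0$ and the trailing entry $q$ and zeros are omitted).
   Context: Notation: $\langle a^r\rangle$ denotes $r$ consecutive copies of the value $a$ within a sequence. For integers $n\ge1$ and even $s$ with $0\le s\le n(n-1)$, define $m=\min\{k\ge 1 : s\le k(k-1)\}$ and define the integer sequence $T(n,s)$ of length $n$ recursively by: (i) if $s=0$, $T(n,s)=\langle 0^n\rangle$; (ii) if $s>0$ and $n>m$, $T(n,s)=\langle \gamma_1,\dots,\gamma_m,0^{n-m}\rangle$ where $\gamma=T(m,s)$; (iii) if $s>0$ and $n\le m$, $T(n,s)=\langle n-1,\gamma_1+1,\dots,\gamma_{n-1}+1\rangle$ where $\gamma=T(n-1,\,s-2(n-1))$. *)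

(* Defs.v *)
From mathcomp Require Import all_boot.
Set Implicit Arguments. Unset Strict Implicit. Unset Printing Implicit Defensive.

Lemma mmin_ex (s : nat) : exists k, (0 < k) && (s <= k * k.-1).
Proof. exists s.+1; rewrite /= leq_pmull //. Qed.

Definition mmin (s : nat) : nat := ex_minn (mmin_ex s).

(* T with fuel: every recursive call strictly decreases n, so fuel n.+1
   suffices for all inputs considered. *)
Fixpoint Tf (fuel n s : nat) : seq nat :=
  match fuel with
  | 0 => nseq n 0
  | f.+1 =>
      if s == 0 then nseq n 0
      else let m := mmin s in
           if m < n then Tf f m s ++ nseq (n - m) 0
           else n.-1 :: map S (Tf f n.-1 (s - 2 * n.-1))
  end.

Definition T (n s : nat) : seq nat := Tf n.+1 n s.

Definition pT (s : nat) : nat := (Nat.sqrt (4 * s + 1)).-1 %/ 2.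

(* Main.v *)
From Stdlib Require Import PeanoNat.
Require Import Defs.
From mathcomp Require Import all_boot zify.

Lemma pT_spec s : pT s * (pT s).+1 <= s < (pT s).+1 * (pT s).+2.
Proof.
rewrite /pT.
have [H1 H2] := Nat.sqrt_spec (4 * s + 1) (Nat.le_0_l _).
set r := Nat.sqrt (4 * s + 1) in H1 H2 *.
have Hr1 : 1 <= r by nia.
have [k Hk] : exists k, r = 2 * k + 1 \/ r = 2 * k + 2.
  exists (r.-1 %/ 2); lia.
have -> : r.-1 %/ 2 = k by lia.
nia.
Qed.

Lemma pT_uniq s p : p * p.+1 <= s < p.+1 * p.+2 -> pT s = p.
Proof.
have := pT_spec s. set t := pT s => H1 H2.
apply/eqP; rewrite eqn_leq; apply/andP; split.
- case: (leqP t p) => // H; exfalso; nia.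
- case: (leqP p t) => // H; exfalso; nia.
Qed.

Lemma mmin_eq s k : 0 < k -> s <= k * k.-1 ->
  (forall j, 0 < j -> s <= j * j.-1 -> k <= j) -> mmin s = k.
Proof.
move=> k0 sk min; rewrite /mmin.
case: ex_minnP => m /andP [m0 sm] Hm.
apply/eqP; rewrite eqn_leq; apply/andP; split.
- by apply: Hm; rewrite k0 sk.
- by apply: min.
Qed.

Definition Gpq n p q :=
  nseq q p.+1 ++ nseq (p.+1 - q) p ++ take (n - p.+1) (q :: nseq (n - p.+2) 0).

Lemma main f : forall n p q, n < f -> q <= p -> p.+1 <= n ->
  (n = p.+1 -> q = 0) -> Tf f n (p * p.+1 + 2 * q) = Gpq n p q.
Proof.
elim: f => [|f IH] n p q //= nf qp pn nq.
case: eqP => [s0|s0].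
  have p0 : p = 0 by nia.
  have q0 : q = 0 by nia.
  subst p q; rewrite /Gpq /=.
  case: n nf pn nq => [|n] _ pn _; first by [].
  rewrite subSS subn0; case: n pn => [|n] _ //=.
  by rewrite ?subSS ?subn0 take_oversize ?size_nseq.
set s := p * p.+1 + 2 * q.
case: (posnP q) => [q0 | qpos].
-
  have p1 : 1 <= p by subst q; nia.
  have hm : mmin s = p.+1.
    apply: mmin_eq => // [|j j0 sj]; first by rewrite /s; nia.
    case: (leqP p.+1 j) => // H; exfalso.
    have : j * j.-1 <= p * p.-1 by apply: leq_mul; lia.
    rewrite /s; nia.
  rewrite hm.
  case: ltnP => H.
  + rewrite IH //; try lia.
    rewrite /Gpq q0 !subn0 subnn /= cats0.
    have -> : n - p.+1 = (n - p.+2).+1 by lia.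
    by rewrite /= take_oversize ?size_nseq.
  + have np : n = p.+1 by lia.
    subst n; rewrite /=.
    have -> : s - 2 * p = p.-1 * p.-1.+1 + 2 * 0.
      rewrite /s q0; case: (p) p1 => //= p' _; nia.
    rewrite IH; try lia.
    rewrite /Gpq q0 !subn0 !subnn /= !cats0.
    case: (p) p1 => //= p' _.
    by rewrite subnn /= cats0 map_nseq.
-
  have hm : mmin s = p.+2.
    apply: mmin_eq => // [|j j0 sj]; first by rewrite /s; nia.
    case: (leqP p.+2 j) => // H; exfalso.
    have : j * j.-1 <= p.+1 * p by apply: leq_mul; lia.
    rewrite /s; nia.
  have np2 : p.+2 <= n by case: (ltngtP n p.+1) => //; lia.
  rewrite hm.
  case: ltnP => H.
  + rewrite IH //; try lia.
    rewrite /Gpq subnn /= -!catA /=.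
    have -> : p.+2 - p.+1 = 1 by lia.
    have -> : n - p.+1 = (n - p.+2).+1 by lia.
    by rewrite /= take_oversize ?size_nseq.
  + have np : n = p.+2 by lia.
    subst n; rewrite /= /s; clear s hm H s0.
    have [p' Ep] : exists p', p = p'.+1 by exists p.-1; lia.
    have [q' Eq] : exists q', q = q'.+1 by exists q.-1; lia.
    subst p q.
    have -> : p'.+1 * p'.+2 + 2 * q'.+1 - 2 * p'.+2 = p' * p'.+1 + 2 * q'.
      by nia.
    rewrite IH; try lia.
    rewrite /Gpq subnn subSS subSS subnn /= map_cat /= !map_nseq map_cat /=.
    rewrite /= !map_nseq.
    have -> : p'.+1 - q' = (p'.+2 - q'.+1) by lia.
    have -> : p'.+1 - p' = 1 by lia.
    have -> : p'.+3 - p'.+2 = 1 by lia.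
    by [].
Qed.

Theorem theorem4 (n s : nat) :
  1 <= n -> ~~ odd s -> s <= n * n.-1 ->
  let p := pT s in
  let q := (s - p * p.+1) %/ 2 in
  [/\ p * p.+1 <= s, ~~ odd (s - p * p.+1), q <= p,
      p.+1 <= n & n = p.+1 -> q = 0] /\
  T n s = nseq q p.+1 ++ nseq (p.+1 - q) p
          ++ take (n - p.+1) (q :: nseq (n - p.+2) 0).
Proof.
move=> n1 es sn p q.
have /andP [H1 H2] := pT_spec s; rewrite -/p in H1 H2.
have ev : ~~ odd (s - p * p.+1).
  rewrite oddB // (negbTE es) /= oddM /= andbN //.
have hs : s = p * p.+1 + 2 * q.
  rewrite /q; move: ev; rewrite -dvdn2 => /dvdnP [k Hk].
  rewrite Hk mulnK //; lia.
have qp : q <= p by nia.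
have pn : p.+1 <= n.
  case: (leqP p.+1 n) => // H; exfalso.
  have : n * n.-1 <= p * p.-1 by apply: leq_mul; lia.
  nia.
have nq : n = p.+1 -> q = 0 by move=> E; subst n; nia.
split; first by split.
rewrite /T hs main //.
Qed.
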